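(* Let $m\ge 2$ be fixed and assume (A1)–(A4). Let $X_{\mathbf 1}$ be the number of coupons collected by all $m$ collectors. Then: (i) if $a_1/n\to0$ and $a_2/n\to0$, then $\mathbb{E}(X_{\mathbf 1})\sim\operatorname{Var}(X_{\mathbf 1})$; (ii) if $a_1/n\to0$ and $a_2/n\to1$, then $\mathbb{E}(a_1-X_{\mathbf 1})\sim\operatorname{Var}(X_{\mathbf 1})$; (iii) if $a_1/n\to1$ and $a_2/n\to1$, then $\mathbb{E}\big(X_{\mathbf 1}+(m-1)n-\sum_{i=1}^m a_i\big)\sim\operatorname{Var}(X_{\mathbf 1})$. No assumption on convergence of $\operatorname{Var}(X_{\mathbf 1})$ is needed.
   Context: Coupon collector model: there are $n$ distinct coupons and $m$ collectors acting independently; collector $i$ collects a uniformly random subset of exactly $a_i$ distinct coupons, independently of the others. We consider a sequence of such models indexed by $n$, with $m$ fixed and $a_i=a_i(n)$, under the asymptotic assumptions: (A1) $n\to\infty$; (A2) $a_i\to\infty$ and $n-a_i\to\infty$ for each $i$; (A3) $1\le a_1\le a_2\le\cdots\le a_m\le n-1$; (A4) $a_i/n\to\alpha_i\in[0,1]$ for each $i$. $x_n\sim y_n$ means $x_n/y_n\to1$. *)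

(* Defs.v *)
From Stdlib Require Import Reals.
From mathcomp Require Import all_boot.

Set Implicit Arguments.
Unset Strict Implicit.
Unset Printing Implicit Defensive.

(* An outcome of the model with n coupons (the set 'I_n) and m collectors:
   collector i (i : 'I_m) holds the set S i of coupons. *)
Definition Sample (m n : nat) := {ffun 'I_m -> {set 'I_n}}.

(* Sample space: collector i holds exactly a i distinct coupons.
   The independent uniform choices give the uniform law on this set. *)
Definition samples (m n : nat) (a : nat -> nat) : {set Sample m n} :=
  [set S : Sample m n | [forall i : 'I_m, #|S i| == a i]].

Definition Expect (m n : nat) (a : nat -> nat) (f : Sample m n -> R) : R :=
  Rdiv (foldr Rplus R0 (map f (enum (samples m n a)))) (INR #|samples m n a|).

Definition Var (m n : nat) (a : nat -> nat) (f : Sample m n -> R) : R :=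
  Expect a (fun S => pow (Rminus (f S) (Expect a f)) 2).

Definition X1 (m n : nat) (S : Sample m n) : R :=
  INR #|\bigcap_(i < m) S i|.

Definition asym (u v : nat -> R) : Prop := Un_cv (fun n => Rdiv (u n) (v n)) R1.

(* Main.v *)
Require Import Defs.
From Stdlib Require Import Reals Lra Lia.
From mathcomp Require Import all_boot zify.
Set Implicit Arguments. Unset Strict Implicit. Unset Printing Implicit Defensive.

Lemma cnt_sub n (T : {set 'I_n}) c : #|T| <= c ->
  #|[set A : {set 'I_n} | (#|A| == c) && (T \subset A)]| = 'C(n - #|T|, c - #|T|).
Proof.
move=> Tc.
have -> : [set A : {set 'I_n} | (#|A| == c) && (T \subset A)] =
   (fun B => B :|: T) @: [set B : {set 'I_n} | B \subset ~: T & #|B| == c - #|T|].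
  apply/setP=> A; rewrite inE; apply/andP/imsetP.
  - case=> /eqP cA TA; exists (A :\: T).
      by rewrite inE cardsDS // cA eqxx andbT; apply/subsetP=> x; rewrite !inE => /andP[].
    apply/setP=> x; rewrite !inE; have := subsetP TA x.
    by case: (x \in T); case: (x \in A) => //= /(_ isT).
  - case=> B; rewrite inE => /andP[BT /eqP cB] ->; split; last exact: subsetUr.
    rewrite cardsU cB.
    have -> : B :&: T = set0.
      apply/setP=> x; rewrite !inE; apply/negP=> /andP[xB xT].
      by have := subsetP BT x xB; rewrite inE xT.
    by rewrite cards0 subn0 subnK.
rewrite card_in_imset.
  by rewrite cards_draws cardsCs setCK card_ord.
move=> B1 B2; rewrite !inE => /andP[h1 _] /andP[h2 _] e.
apply/setP=> x.
have : (x \in B1 :|: T) = (x \in B2 :|: T) by rewrite e.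
rewrite !inE.
case: (boolP (x \in T)) => xT; last by rewrite !orbF.
have n1 : x \notin B1 by apply/negP=> /(subsetP h1); rewrite inE xT.
have n2 : x \notin B2 by apply/negP=> /(subsetP h2); rewrite inE xT.
by rewrite (negbTE n1) (negbTE n2).
Qed.

Lemma cnt_fam m n (a : nat -> nat) (T : {set 'I_n}) :
  #|[set S in samples m n a | [forall i, T \subset S i]]| =
  foldr muln 1 (map (fun i => #|[set A : {set 'I_n} | (#|A| == a i) && (T \subset A)]|) (iota 0 m)).
Proof.
pose F := fun i : 'I_m => [set A : {set 'I_n} | (#|A| == a i) && (T \subset A)].
have -> : #|[set S in samples m n a | [forall i, T \subset S i]]| =
          #|(family (fun i => mem (F i)) : simpl_pred (Sample m n))|.
  apply: eq_card => S; rewrite !inE; apply/andP/familyP.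
    by case=> /forallP h1 /forallP h2 i; rewrite inE h2 (h1 i).
  move=> h; split; apply/forallP=> i; have := h i; rewrite inE => /andP[] //.
rewrite card_family -val_enum_ord -map_comp /image_mem.
by [].
Qed.

Lemma card_sum (T : finType) (B : {set T}) : #|B| = \sum_j (j \in B : nat).
Proof. by rewrite -sum1_card big_mkcond /=; apply: eq_bigr => j _; case: (j \in B). Qed.

Lemma sum_ind (T : finType) (D : {set T}) (P : pred T) :
  \sum_(S in D) (P S : nat) = #|[set S in D | P S]|.
Proof.
rewrite card_sum big_mkcond /=.
by apply: eq_bigr => S _; rewrite !inE; case: (S \in D); case: (P S).
Qed.

Lemma card_sq (T : finType) (B : {set T}) :
  #|B| ^ 2 = \sum_j \sum_k ((j \in B : nat) * (k \in B : nat)).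
Proof.
rewrite expnS expn1 {1}card_sum big_distrl /=; apply: eq_bigr => j _.
by rewrite card_sum big_distrr.
Qed.

Section S.
Variables (m n : nat) (a : nat -> nat).
Let D := samples m n a.

Lemma inter_in (S : Sample m n) (T : {set 'I_n}) :
  (T \subset \bigcap_(i < m) S i) = [forall i, T \subset S i].
Proof.
apply/idP/forallP.
  by move=> h i; apply: subset_trans h _; apply: bigcap_inf.
by move=> h; apply/bigcapsP=> i _; apply: h.
Qed.

Lemma sumX : \sum_(S in D) #|\bigcap_(i < m) S i| =
   \sum_(j : 'I_n) #|[set S in D | [forall i, [set j] \subset S i]]|.
Proof.
under eq_bigr do rewrite card_sum.
rewrite exchange_big /=; apply: eq_bigr => j _.
rewrite -sum_ind; apply: eq_bigr => S _.
by rewrite -inter_in sub1set.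
Qed.

Lemma sumX2 : \sum_(S in D) #|\bigcap_(i < m) S i| ^ 2 =
   \sum_(j : 'I_n) \sum_(k : 'I_n) #|[set S in D | [forall i, [set j; k] \subset S i]]|.
Proof.
under eq_bigr do rewrite card_sq.
rewrite exchange_big /=; apply: eq_bigr => j _.
rewrite exchange_big /=; apply: eq_bigr => k _.
rewrite -sum_ind; apply: eq_bigr => S _.
rewrite -inter_in subUset !sub1set.
by case: (j \in _); case: (k \in _).
Qed.

Definition prodN (l : seq nat) (f : nat -> nat) := foldr muln 1 (map f l).

Lemma prodN_eq l f g : (forall i, i \in l -> f i = g i) -> prodN l f = prodN l g.
Proof. by move=> h; rewrite /prodN ((eq_in_map f g l).1 h). Qed.

Hypothesis Ha : forall i, i < m -> 2 <= a i.

Lemma cnt_T (T : {set 'I_n}) : #|T| <= 2 ->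
  #|[set S in D | [forall i, T \subset S i]]| =
  prodN (iota 0 m) (fun i => 'C(n - #|T|, a i - #|T|)).
Proof.
move=> hT; rewrite cnt_fam; apply: prodN_eq => i; rewrite mem_iota add0n => /andP[_ hi].
by apply: cnt_sub; apply: leq_trans hT (Ha hi).
Qed.

Lemma cardD : #|D| = prodN (iota 0 m) (fun i => 'C(n, a i)).
Proof.
have E : prodN (iota 0 m) (fun i => 'C(n, a i)) = prodN (iota 0 m)
   (fun i => 'C(n - #|set0 : {set 'I_n}|, a i - #|set0 : {set 'I_n}|)).
  by apply: prodN_eq => i _; rewrite cards0 !subn0.
rewrite E -cnt_T ?cards0 //.
apply: eq_card => S; rewrite !inE.
have -> : [forall i, set0 \subset S i] by apply/forallP=> i; apply: sub0set.
by rewrite andbT.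
Qed.

Lemma sumX_eq : \sum_(S in D) #|\bigcap_(i < m) S i| =
   n * prodN (iota 0 m) (fun i => 'C(n - 1, a i - 1)).
Proof.
rewrite sumX.
have h j : #|[set S in D | [forall i, [set j] \subset S i]]| =
    prodN (iota 0 m) (fun i => 'C(n - 1, a i - 1)).
  by rewrite cnt_T cards1.
by rewrite (eq_bigr _ (fun j _ => h j)) sum_nat_const card_ord.
Qed.

Lemma sumX2_eq : \sum_(S in D) #|\bigcap_(i < m) S i| ^ 2 =
   n * prodN (iota 0 m) (fun i => 'C(n - 1, a i - 1)) +
   n * (n - 1) * prodN (iota 0 m) (fun i => 'C(n - 2, a i - 2)).
Proof.
rewrite sumX2 -sumX_eq sumX.
have h j : \sum_(k : 'I_n) #|[set S in D | [forall i, [set j; k] \subset S i]]| =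
   #|[set S in D | [forall i, [set j] \subset S i]]| +
   (n - 1) * prodN (iota 0 m) (fun i => 'C(n - 2, a i - 2)).
  rewrite (bigD1 j) //= setUid; congr (_ + _).
  have -> : n - 1 = #|[pred k | k != j]| by rewrite cardC1 card_ord subn1.
  rewrite -sum_nat_const; apply: eq_bigr => k kj.
  by rewrite cnt_T cards2 eq_sym kj.
rewrite (eq_bigr _ (fun j _ => h j)) big_split /= sum_nat_const card_ord.
by rewrite mulnA.
Qed.
End S.

Local Open Scope R_scope.

Definition prodR (l : seq nat) (f : nat -> R) := foldr Rmult 1 (map f l).
Definition sumR (l : seq nat) (f : nat -> R) := foldr Rplus R0 (map f l).

Lemma L4 (l : seq nat) (r s : nat -> R) (mu : R) : 0 <= mu ->
  (forall i, i \in l -> 0 <= r i <= 1 /\ s i = 1 - (1 + mu) * (1 - r i) /\ 0 <= s i) ->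
  let P := prodR l r in let Pl := prodR l s in
  let F := P - 1 + sumR l (fun i => 1 - r i) in
  let D := mu * (1 - P) - (P - Pl) in
  [/\ 0 <= Pl <= P, P <= 1, P - Pl <= mu * (1 - P), mu * Pl * (1 - P) <= P - Pl &
   [/\ 0 <= F, (1 + mu) * mu * Pl * F <= D & D <= (1 + mu) * mu * F]].
Proof.
move=> mu0; elim: l => [|i l IH] H /=.
  rewrite /prodR /sumR /=; split; try lra; split; lra.
have [[r0 r1] [si s0]] := H i (mem_head _ _).
have := IH (fun j jl => H j ltac:(by rewrite inE jl orbT)).
rewrite /prodR /sumR /= -/(prodR l r) -/(prodR l s) -/(sumR l _).
set P := prodR l r; set Pl := prodR l s; set S := sumR l _.
move=> [[Pl0 PlP] P1 h2 h3 [F0 h5 h6]].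
have ysx : s i <= r i by nra.
have y1 : s i <= 1 by nra.
split.
- split; first nra. apply Rmult_le_compat; lra.
- nra.
- nra.
- have e1 : r i * P - s i * Pl = r i * (P - Pl) + mu * (1 - r i) * Pl by rewrite si; ring.
  have e2 : r i * (mu * Pl * (1 - P)) <= r i * (P - Pl) by apply Rmult_le_compat_l; lra.
  have e3 : 0 <= mu * Pl * (1 - r i * P) by apply Rmult_le_pos; [nra | nra].
  have e4 : s i * (mu * Pl * (1 - r i * P)) <= mu * Pl * (1 - r i * P) by nra.
  nra.
have eF : r i * P - 1 + (1 - r i + S) = (P - 1 + S) + (1 - r i) * (1 - P) by ring.
have eD : mu * (1 - r i * P) - (r i * P - s i * Pl) =
   (mu * (1 - P) - (P - Pl)) + (1 + mu) * (1 - r i) * (P - Pl) by rewrite si; ring.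
rewrite eF eD.
have t0 : 0 <= (1 - r i) * (1 - P) by apply Rmult_le_pos; lra.
split.
- lra.
- have f1 : s i * (Pl * (P - 1 + S + (1 - r i) * (1 - P))) <= Pl * (P - 1 + S + (1 - r i) * (1 - P)).
    have : 0 <= Pl * (P - 1 + S + (1 - r i) * (1 - P)) by apply Rmult_le_pos; lra.
    nra.
  have f2 : (1 + mu) * (1 - r i) * (mu * Pl * (1 - P)) <= (1 + mu) * (1 - r i) * (P - Pl).
    apply Rmult_le_compat_l; last lra. apply Rmult_le_pos; lra.
  have f3 : 0 <= (1 + mu) * mu by nra.
  have f4 : (1 + mu) * mu * (s i * (Pl * (P - 1 + S + (1 - r i) * (1 - P)))) <=
            (1 + mu) * mu * (Pl * (P - 1 + S + (1 - r i) * (1 - P))).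
    by apply Rmult_le_compat_l.
  nra.
- have f2 : (1 + mu) * (1 - r i) * (P - Pl) <= (1 + mu) * (1 - r i) * (mu * (1 - P)).
    apply Rmult_le_compat_l; last lra. apply Rmult_le_pos; lra.
  nra.
Qed.

Section Lin.
Variable T : Type.
Implicit Types (s : seq T) (f g : T -> R).
Lemma fr_add s f g : foldr Rplus R0 (map (fun x => f x + g x) s) =
  foldr Rplus R0 (map f s) + foldr Rplus R0 (map g s).
Proof. elim: s => /= [|x s ->]; lra. Qed.
Lemma fr_scal s c f : foldr Rplus R0 (map (fun x => c * f x) s) = c * foldr Rplus R0 (map f s).
Proof. elim: s => /= [|x s ->]; lra. Qed.
Lemma fr_const s c : foldr Rplus R0 (map (fun x => c) s) = INR (size s) * c.
Proof.
elim: s => [|x s IH]; first by rewrite /=; lra.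
rewrite (_ : size (x :: s) = (size s).+1) // S_INR /= IH; lra.
Qed.
Lemma fr_ext s f g : (forall x, f x = g x) -> foldr Rplus R0 (map f s) = foldr Rplus R0 (map g s).
Proof. by move=> h; rewrite (eq_map h). Qed.
Lemma fr_INR s (g : T -> nat) : foldr Rplus R0 (map (fun x => INR (g x)) s) = INR (\sum_(x <- s) g x).
Proof. elim: s => /= [|x s ->]; first by rewrite big_nil. by rewrite big_cons plus_INR. Qed.
End Lin.

Section E.
Variables (m n : nat) (a : nat -> nat).
Hypothesis N0 : INR #|samples m n a| <> 0.

Lemma E_ext (f g : Sample m n -> R) : (forall S, f S = g S) -> Expect a f = Expect a g.
Proof. by move=> h; rewrite /Expect (fr_ext _ h). Qed.

Lemma E_aff c d (f : Sample m n -> R) : Expect a (fun S => c + d * f S) = c + d * Expect a f.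
Proof.
rewrite /Expect fr_add fr_scal fr_const -cardE /Rdiv.
set N := INR _. set X := foldr _ _ _.
field. exact N0.
Qed.

Lemma E_add (f g : Sample m n -> R) : Expect a (fun S => f S + g S) = Expect a f + Expect a g.
Proof. rewrite /Expect fr_add /Rdiv; ring. Qed.
Lemma E_scal c (f : Sample m n -> R) : Expect a (fun S => c * f S) = c * Expect a f.
Proof. rewrite /Expect fr_scal /Rdiv; ring. Qed.

Lemma Var_eq (f : Sample m n -> R) : Var a f = Expect a (fun S => f S ^ 2) - Expect a f ^ 2.
Proof.
rewrite /Var.
set E := Expect a f.
have -> : Expect a (fun S => (f S - E) ^ 2) =
   Expect a (fun S => E ^ 2 + 1 * ((f S ^ 2) + (- 2 * E) * f S)).
  by apply: E_ext => S; ring.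
rewrite E_aff E_add E_scal -/E; ring.
Qed.
End E.

Lemma INR_muln (x y : nat) : INR (x * y)%N = INR x * INR y.
Proof. exact: mult_INR. Qed.
Lemma INR_addn (x y : nat) : INR (x + y)%N = INR x + INR y.
Proof. exact: plus_INR. Qed.
Lemma INR_subn (x y : nat) : (y <= x)%N -> INR (x - y)%N = INR x - INR y.
Proof. move=> h; apply: minus_INR; exact/leP. Qed.

Lemma INR_prodN l g : INR (prodN l g) = prodR l (fun i => INR (g i)).
Proof.
elim: l => [|i l IH] //. rewrite /prodN /= INR_muln. by rewrite -/(prodN l g) IH.
Qed.

Lemma prodR_mul l f h g : (forall i, i \in l -> f i = h i * g i) ->
  prodR l f = prodR l h * prodR l g.
Proof.
elim: l => [|i l IH] H; first by rewrite /prodR /=; ring.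
rewrite /prodR /= -!/(prodR l _) IH; last by move=> j jl; apply: H; rewrite inE jl orbT.
rewrite H ?mem_head //; ring.
Qed.

Lemma prodR_pos l f : (forall i, i \in l -> 0 < f i) -> 0 < prodR l f.
Proof.
elim: l => [|i l IH] H; first by rewrite /prodR /=; lra.
rewrite /prodR /= -!/(prodR l _); apply: Rmult_lt_0_compat; first by apply: H; rewrite mem_head.
by apply: IH => j jl; apply: H; rewrite inE jl orbT.
Qed.

Lemma moments m n (a : nat -> nat) : (2 <= n)%N ->
  (forall i, (i < m)%N -> (2 <= a i)%N && (a i <= n)%N) ->
  let P := prodR (iota 0 m) (fun i => INR (a i) / INR n) in
  let Q := prodR (iota 0 m) (fun i => (INR (a i) - 1) / (INR n - 1)) in
  [/\ 0 < INR #|samples m n a|, Expect a (@X1 m n) = INR n * P &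
      Expect a (fun S : Sample m n => X1 S ^ 2) = INR n * P + INR n * (INR n - 1) * (P * Q)].
Proof.
move=> n2 Ha P Q.
have Ha2 : forall i, (i < m)%N -> (2 <= a i)%N by move=> i /Ha /andP[].
have nR : 2 <= INR n by have := le_INR 2 n (leP n2); rewrite /=; lra.
have hi : forall i, i \in iota 0 m -> (2 <= a i)%N /\ (a i <= n)%N.
  by move=> i; rewrite mem_iota add0n => /andP[_ /Ha /andP[]].
set N0 := INR #|samples m n a|.
have N0pos : 0 < N0.
  rewrite /N0 cardD // INR_prodN; apply: prodR_pos => i /hi [h1 h2].
  apply: lt_0_INR; apply/ltP; by rewrite bin_gt0.
have eN0 : N0 = prodR (iota 0 m) (fun i => INR 'C(n, a i)) by rewrite /N0 cardD // INR_prodN.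
have e1 : forall i, i \in iota 0 m ->
    INR 'C(n - 1, a i - 1) = INR (a i) / INR n * INR 'C(n, a i).
  move=> i /hi [h1 h2]; rewrite !subn1.
  have := mul_bin_diag n (a i).-1.
  rewrite prednK; last by apply: leq_trans h1.
  move=> /(congr1 INR); rewrite !INR_muln => e.
  apply: (Rmult_eq_reg_l (INR n)); last lra.
  rewrite e; field; lra.
have e2 : forall i, i \in iota 0 m ->
    INR 'C(n - 2, a i - 2) = ((INR (a i) / INR n) * ((INR (a i) - 1) / (INR n - 1))) * INR 'C(n, a i).
  move=> i ii; have [h1 h2] := hi i ii.
  have := mul_bin_diag n.-1 (a i).-2.
  have -> : n.-1.-1 = (n - 2)%N by lia.
  have -> : ((a i).-2).+1 = (a i - 1)%N by lia.
  have -> : (a i).-2 = (a i - 2)%N by lia.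
  have -> : n.-1 = (n - 1)%N by lia.
  move=> /(congr1 INR); rewrite !INR_muln (e1 i ii) !INR_subn; try by apply: leq_trans h1.
  rewrite /= => e.
  have ha : 2 <= INR (a i) by have := le_INR 2 (a i) (leP h1); rewrite /=; lra.
  apply: (Rmult_eq_reg_l (INR n - 1)); last lra.
  rewrite e; field; lra.
  by apply: leq_trans n2.
split => //.
- rewrite /Expect /X1 fr_INR big_enum /= sumX_eq // INR_muln INR_prodN -/N0.
  rewrite (prodR_mul (h := fun i => INR (a i) / INR n) (g := fun i => INR 'C(n, a i))) //.
  rewrite -eN0 -/P; field; lra.
- rewrite /Expect.
  have -> : [seq X1 x ^ 2 | x <- enum (samples m n a)] =
            map (fun x : Sample m n => INR (#|\bigcap_(i < m) x i| ^ 2)%N) (enum (samples m n a)).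
    apply: eq_map => x; rewrite /X1 expnS expn1 INR_muln /=; ring.
  rewrite fr_INR big_enum /= sumX2_eq // INR_addn !INR_muln !INR_prodN -/N0 INR_subn; last by apply: leq_trans n2.
  rewrite (prodR_mul (f := fun i => INR 'C(n - 1, a i - 1)) (h := fun i => INR (a i) / INR n) (g := fun i => INR 'C(n, a i))) //.
  rewrite (prodR_mul (f := fun i => INR 'C(n - 2, a i - 2)) (h := fun i => (INR (a i) / INR n) * ((INR (a i) - 1) / (INR n - 1))) (g := fun i => INR 'C(n, a i))) //.
  rewrite (prodR_mul (f := fun i => (INR (a i) / INR n) * ((INR (a i) - 1) / (INR n - 1)))
     (h := fun i => INR (a i) / INR n) (g := fun i => ((INR (a i) - 1) / (INR n - 1)))) //.
  rewrite -eN0 -/P -/Q /=; field; lra.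
Qed.
Definition ev (P : nat -> Prop) := exists N, forall n, (N <= n)%N -> P n.

Lemma ev_and P Q : ev P -> ev Q -> ev (fun n => P n /\ Q n).
Proof.
move=> [N1 h1] [N2 h2]; exists (maxn N1 N2) => n hn; split.
  by apply: h1; apply: leq_trans hn; apply: leq_maxl.
by apply: h2; apply: leq_trans hn; apply: leq_maxr.
Qed.

Lemma ev_mono (P Q : nat -> Prop) : ev P -> (forall n, P n -> Q n) -> ev Q.
Proof. by move=> [N h] hq; exists N => n /h /hq. Qed.

Lemma ev_all m (P : nat -> nat -> Prop) : (forall i, (i < m)%N -> ev (P i)) ->
  ev (fun n => forall i, (i < m)%N -> P i n).
Proof.
elim: m => [|m IH] H; first by exists 0%N => n _ i.
have H2 := ev_and (IH (fun i hi => H i (ltnW hi))) (H m (ltnSn m)).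
apply: (ev_mono H2) => n [h1 h2] i; rewrite ltnS leq_eqVlt => /orP[/eqP -> //|].
exact: h1.
Qed.

Lemma cv_ev u l : Un_cv u l -> forall e, 0 < e -> ev (fun n => Rabs (u n - l) < e).
Proof.
move=> h e e0; have [N hN] := h e e0; exists N => n hn.
by have := hN n (leP hn).
Qed.

Lemma cv_of_ev u l : (forall e, 0 < e -> ev (fun n => Rabs (u n - l) < e)) -> Un_cv u l.
Proof.
move=> h e e0; have [N hN] := h e e0; exists N => n hn.
by apply: hN; apply/leP.
Qed.

Lemma squeeze (L U u : nat -> R) l : ev (fun n => L n <= u n <= U n) ->
  Un_cv L l -> Un_cv U l -> Un_cv u l.
Proof.
move=> hb hL hU; apply: cv_of_ev => e e0.
have H2 := ev_and hb (ev_and (cv_ev hL e0) (cv_ev hU e0)).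
apply: (ev_mono H2) => n [[h1 h2] [h3 h4]].
move: h3 h4; rewrite /Rabs; do 3 case: Rcase_abs; lra.
Qed.

Lemma cv_inv1 u : Un_cv u 1 -> Un_cv (fun n => / u n) 1.
Proof.
move=> h; apply: cv_of_ev => e e0.
have e1 : 0 < Rmin (1/2) (e/2) by apply: Rmin_pos; lra.
have H2 := cv_ev h e1.
apply: (ev_mono H2) => n hn.
have hm1 := Rmin_l (1/2) (e/2); have hm2 := Rmin_r (1/2) (e/2).
have hu : 1/2 < u n by move: hn; rewrite /Rabs; case: Rcase_abs; lra.
have hv : / u n * u n = 1 by apply: Rinv_l; lra.
have v0 : 0 < / u n by apply: Rinv_0_lt_compat; lra.
have v2 : / u n < 2.
  apply: (Rmult_lt_reg_r (u n)); first lra. rewrite hv; lra.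
have e3 : / u n - 1 = / u n * (1 - u n) by rewrite Rmult_minus_distr_l hv; ring.
rewrite e3 Rabs_mult (Rabs_right (/ u n)); last lra.
have : Rabs (1 - u n) = Rabs (u n - 1) by rewrite Rabs_minus_sym.
move=> ->; have := Rabs_pos (u n - 1); nra.
Qed.

Lemma cv_const c : Un_cv (fun _ => c) c.
Proof. move=> e e0; exists 0%nat => n _; rewrite /Rdist Rminus_diag Rabs_R0; lra. Qed.

Lemma asym_of (E V L U : nat -> R) :
  ev (fun n => 0 < E n /\ L n * E n <= V n /\ V n <= U n * E n) ->
  Un_cv L 1 -> Un_cv U 1 -> asym E V.
Proof.
move=> h hL hU; rewrite /asym.
have hL2 : ev (fun n => 1/2 < L n).
  have H2 := cv_ev hL (ltac:(lra) : 0 < 1/2).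
  apply: (ev_mono H2) => n.
  rewrite /Rabs; case: Rcase_abs; lra.
apply: (squeeze (L := fun n => / U n) (U := fun n => / L n)).
- have H2 := ev_and h hL2.
  apply: (ev_mono H2) => n [[E0 [h1 h2]] h3].
  have V0 : 0 < V n by nra.
  have U0 : 0 < U n by nra.
  split.
  + apply: (Rmult_le_reg_r (V n)); first lra.
    rewrite /Rdiv Rmult_assoc Rinv_l; last lra.
    apply: (Rmult_le_reg_l (U n)); first lra.
    rewrite -[U n * (/ U n * V n)]Rmult_assoc Rinv_r; lra.
  + apply: (Rmult_le_reg_r (V n)); first lra.
    rewrite /Rdiv Rmult_assoc Rinv_l; last lra.
    apply: (Rmult_le_reg_l (L n)); first lra.
    rewrite -[L n * (/ L n * V n)]Rmult_assoc Rinv_r; lra.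
- exact: cv_inv1.
- exact: cv_inv1.
Qed.

Lemma cv_mu : Un_cv (fun n => / (INR n - 1)) 0.
Proof.
apply: cv_infty_cv_0 => M.
have [N hN] := INR_unbounded (M + 1).
exists N => n hn; have := le_INR _ _ hn; lra.
Qed.

Lemma memb (i j : nat) (l : seq nat) : j \in l -> j \in i :: l.
Proof. by move=> h; rewrite inE h orbT. Qed.

Lemma P01 l f : (forall i, i \in l -> 0 <= f i <= 1) -> 0 <= prodR l f <= 1.
Proof.
elim: l => [|i l IH] H; rewrite /prodR /=; first lra.
rewrite -/(prodR l f); have := IH (fun j hj => H j (memb i hj)).
have := H i (mem_head _ _); nra.
Qed.

Lemma L1 l f g : (forall i, i \in l -> 0 <= g i <= f i /\ f i <= 1) ->
  0 <= prodR l g <= prodR l f /\ prodR l f - prodR l g <= sumR l (fun i => f i - g i).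
Proof.
elim: l => [|i l IH] H; rewrite /prodR /sumR /=; first lra.
rewrite -/(prodR l f) -/(prodR l g) -/(sumR l _).
have [[h1 h2] h3] := H i (mem_head _ _).
have [[q1 q2] q3] := IH (fun j hj => H j (memb i hj)).
have [_ p1] := P01 (l := l) (f := f) (fun j hj => let: conj a b := H j (memb i hj) in
   conj (Rle_trans _ _ _ (proj1 a) (proj2 a)) b).
split; first split; nra.
Qed.

Lemma L2 l f : (forall i, i \in l -> 0 <= f i <= 1) ->
  1 - prodR l f <= sumR l (fun i => 1 - f i).
Proof.
elim: l => [|i l IH] H; rewrite /prodR /sumR /=; first lra.
rewrite -/(prodR l f) -/(sumR l _).
have := IH (fun j hj => H j (memb i hj)).
have := P01 (fun j hj => H j (memb i hj)).
have := H i (mem_head _ _); nra.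
Qed.

Lemma L3 l f : (forall i, i \in l -> 0 <= f i <= 1) ->
  sumR l (fun i => 1 - f i) <= INR (size l) * (1 - prodR l f).
Proof.
elim: l => [|i l IH] H; first by rewrite /prodR /sumR /=; lra.
rewrite (_ : size (i :: l) = (size l).+1) // S_INR /prodR /sumR /=.
rewrite -/(prodR l f) -/(sumR l _).
have := IH (fun j hj => H j (memb i hj)).
have := P01 (fun j hj => H j (memb i hj)).
have := H i (mem_head _ _).
have := pos_INR (size l).
set P := prodR l f; set S := sumR l _.
move=> k0 [f0 f1] [P0 P1] h.
have : INR (size l) * (1 - P) <= INR (size l) * (1 - f i * P).
  apply: Rmult_le_compat_l => //; nra.
have : 0 <= f i * (1 - P) by apply: Rmult_le_pos; lra.
move: h; rewrite -/S => h1 h2 h3.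
have h4 : f i * P <= f i by nra.
rewrite Rmult_plus_distr_r Rmult_1_l.
set k := INR _ in h1 h3 *.
lra.
Qed.

Lemma sumR_le l f g : (forall i, i \in l -> f i <= g i) -> sumR l f <= sumR l g.
Proof.
elim: l => [|i l IH] H; rewrite /sumR /=; first lra.
rewrite -!/(sumR l _); have := IH (fun j hj => H j (memb i hj)).
have := H i (mem_head _ _); lra.
Qed.

Lemma sumR_const l c : sumR l (fun _ => c) = INR (size l) * c.
Proof.
elim: l => [|i l IH]; first by rewrite /sumR /=; lra.
rewrite (_ : size (i :: l) = (size l).+1) // S_INR /sumR /= -!/(sumR l _) IH; ring.
Qed.

Lemma sumR_sub l c f : sumR l (fun i => c - f i) = INR (size l) * c - sumR l f.
Proof.
elim: l => [|i l IH]; first by rewrite /sumR /=; lra.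
rewrite (_ : size (i :: l) = (size l).+1) // S_INR /sumR /= -!/(sumR l _) IH; ring.
Qed.

Lemma sumR_div l c f : sumR l (fun i => f i / c) = sumR l f / c.
Proof.
elim: l => [|i l IH]; rewrite /sumR /=; first by rewrite /Rdiv; ring.
rewrite -!/(sumR l _) IH /Rdiv; ring.
Qed.

Lemma cv_sumR l (f : nat -> nat -> R) : (forall i, i \in l -> Un_cv (fun n => f n i) 0) ->
  Un_cv (fun n => sumR l (f n)) 0.
Proof.
elim: l => [|i l IH] H; rewrite /sumR /=; first exact: cv_const.
have := CV_plus _ _ _ _ (H i (mem_head _ _)) (IH (fun j hj => H j (memb i hj))).
by rewrite Rplus_0_l.
Qed.

Lemma sumR_ext l f g : (forall i, i \in l -> f i = g i) -> sumR l f = sumR l g.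
Proof.
elim: l => [|i l IH] H; rewrite /sumR //=.
rewrite -!/(sumR l _) (H i (mem_head _ _)) IH // => j hj; exact: H j (memb i hj).
Qed.

Lemma sumR_scal l c f : sumR l (fun i => c * f i) = c * sumR l f.
Proof.
elim: l => [|i l IH]; rewrite /sumR /=; first ring.
rewrite -!/(sumR l _) IH; ring.
Qed.

Section Alg.
Variables (x : R) (r s : nat -> R) (l2 : seq nat).
Hypothesis Hx : 2 <= x.
Hypothesis Hr : forall i, i \in [:: 0, 1 & l2]%N -> 0 < r i < 1.
Hypothesis Hs : forall i, i \in [:: 0, 1 & l2]%N -> s i = (x * r i - 1) / (x - 1) /\ 0 < s i.

Let l1 := (1 :: l2)%N.
Let P := prodR [:: 0, 1 & l2]%N r.
Let Q := prodR [:: 0, 1 & l2]%N s.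
Let P1 := prodR l1 r.
Let Q1 := prodR l1 s.
Let k := INR (size l1).
Let V := x * P + x * (x - 1) * (P * Q) - (x * P) ^ 2.

Lemma hr1 i : i \in l1 -> 0 < r i < 1.
Proof. by move=> h; apply: Hr; apply: memb. Qed.
Lemma hs1 i : i \in l1 -> s i = (x * r i - 1) / (x - 1) /\ 0 < s i.
Proof. by move=> h; apply: Hs; apply: memb. Qed.

Lemma sr i : i \in [:: 0, 1 & l2]%N -> 0 < s i <= r i /\ r i - s i = (1 - r i) / (x - 1).
Proof.
move=> h; have [e s0] := Hs h; have := Hr h; rewrite e => hr.
split; last by field; lra.
split; first by rewrite -e.
apply: (Rmult_le_reg_r (x - 1)); first lra.
rewrite /Rdiv Rmult_assoc Rinv_l; lra.
Qed.

Lemma facts1 : [/\ 0 <= Q1 <= P1, P1 - Q1 <= sumR l1 (fun i => (1 - r i) / (x - 1)),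
   P1 < 1, Q1 <= r 1%N & 0 < P1].
Proof.
have H1 : forall i, i \in l1 -> 0 <= s i <= r i /\ r i <= 1.
  move=> i hi; have [[h1 h2] _] := sr (memb 0%N hi); have := hr1 hi; lra.
have [h1 h2] := L1 H1.
have e := sumR_ext (l := l1) (f := fun i => r i - s i) (g := fun i => (1 - r i) / (x - 1))
  (fun i hi => proj2 (sr (memb 0%N hi))).
have hP2 : 0 <= prodR l2 r <= 1.
  apply: P01 => i hi; have := Hr (memb 0%N (memb 1%N hi)); lra.
have hQ2 : 0 <= prodR l2 s <= 1.
  apply: P01 => i hi; have := Hr (memb 0%N (memb 1%N hi)).
  have [[? ?] _] := sr (memb 0%N (memb 1%N hi)); lra.
have hr1' := hr1 (mem_head 1%N l2).
have [[s1p s1r] _] := sr (memb 0%N (mem_head 1%N l2)).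
have eP1 : P1 = r 1%N * prodR l2 r by [].
have eQ1 : Q1 = s 1%N * prodR l2 s by [].
have P1pos : 0 < P1.
  rewrite /P1 /l1; apply: prodR_pos => i hi; exact: (proj1 (hr1 hi)).
split => //.
- by rewrite -e.
- rewrite eP1; nra.
- rewrite eQ1; nra.
Qed.

Lemma sum1 : sumR l1 (fun i => (1 - r i) / (x - 1)) <= k / (x - 1).
Proof.
rewrite sumR_div /Rdiv; apply: Rmult_le_compat_r.
  apply: Rlt_le; apply: Rinv_0_lt_compat; lra.
rewrite /k -[INR _]Rmult_1_r -sumR_const; apply: sumR_le => i /hr1; lra.
Qed.

Lemma eT : x * P - (x - 1) * Q = x * r 0%N * (P1 - Q1) + Q1.
Proof.
have [e _] := Hs (mem_head _ _).
rewrite (_ : P = r 0%N * P1) // (_ : Q = s 0%N * Q1) // e.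
field; lra.
Qed.

Lemma case_i_alg : 0 < x * P /\ (1 - (2 * k * r 0%N + r 1%N)) * (x * P) <= V /\ V <= 1 * (x * P).
Proof.
have [[Q0 QP] h2 P11 Q1r P1p] := facts1.
have hs := sum1.
have r0 := Hr (mem_head _ _).
have eP : P = r 0%N * P1 by [].
have EP : 0 < x * P by rewrite eP; apply: Rmult_lt_0_compat; [lra | nra].
have eV : V = (x * P) * (1 - (x * P - (x - 1) * Q)).
  rewrite /V /Q; field.
rewrite eV eT.
have k0 : 0 <= k by apply: pos_INR.
have hA : x * r 0%N * (P1 - Q1) <= 2 * k * r 0%N.
  have h3 : P1 - Q1 <= k / (x - 1) by lra.
  have h4 : x * r 0%N * (P1 - Q1) <= x * r 0%N * (k / (x - 1)).
    apply: Rmult_le_compat_l => //; nra.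
  have h5 : x * r 0%N * (k / (x - 1)) = r 0%N * k * (x / (x - 1)) by field; lra.
  have h6 : x / (x - 1) <= 2.
    apply: (Rmult_le_reg_r (x - 1)); first lra.
    rewrite /Rdiv Rmult_assoc Rinv_l; lra.
  have h7 : 0 <= r 0%N * k by nra.
  nra.
have hB : 0 <= x * r 0%N * (P1 - Q1) by apply: Rmult_le_pos; nra.
split => //; split.
- rewrite (Rmult_comm _ (x * P)); apply: Rmult_le_compat_l; lra.
- rewrite (Rmult_comm 1 (x * P)); apply: Rmult_le_compat_l; lra.
Qed.

Lemma case_ii_alg : 0 < x * r 0%N - x * P /\ (P1 * (1 - k * r 0%N)) * (x * r 0%N - x * P) <= V /\ V <= P1 * (x * r 0%N - x * P).
Proof.
have [[Q0 QP] h2 P11 Q1r P1p] := facts1.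
have r0 := Hr (mem_head _ _).
have [[s0p s0r] _] := sr (mem_head _ _).
have [es0 _] := Hs (mem_head _ _).
have eP : P = r 0%N * P1 by [].
have xr0 : x * r 0%N - 1 = (x - 1) * s 0%N by rewrite es0; field; lra.
have xr01 : 0 <= x * r 0%N - 1 by rewrite xr0; nra.
set E := x * r 0%N - x * P.
have eE : E = x * r 0%N * (1 - P1) by rewrite /E eP; ring.
have E0 : 0 < E by rewrite eE; apply: Rmult_lt_0_compat; nra.
set W := (x * r 0%N - 1) * (P1 - Q1).
have eV : V = E * P1 - x * r 0%N * P1 * W.
  rewrite /V /W eE; have := eT; rewrite eP => eT'.
  have eQ : Q = s 0%N * Q1 by [].
  rewrite eQ es0; field; lra.
have W0 : 0 <= W by apply: Rmult_le_pos; lra.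
have hL3 : sumR l1 (fun i => 1 - r i) <= k * (1 - P1).
  apply: L3 => i /hr1; lra.
have hS0 : 0 <= sumR l1 (fun i => 1 - r i).
  rewrite -(Rmult_0_r (INR (size l1))) -sumR_const; apply: sumR_le => i /hr1; lra.
have hW : W <= k * r 0%N * (1 - P1).
  have h3 : W <= (x * r 0%N - 1) * (sumR l1 (fun i => 1 - r i) / (x - 1)).
    rewrite /W -sumR_div; apply: Rmult_le_compat_l; lra.
  have h4 : (x * r 0%N - 1) * (sumR l1 (fun i => 1 - r i) / (x - 1)) =
            s 0%N * sumR l1 (fun i => 1 - r i) by rewrite xr0; field; lra.
  have h5 : s 0%N * sumR l1 (fun i => 1 - r i) <= r 0%N * (k * (1 - P1)).
    apply: Rmult_le_compat; lra.
  lra.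
have xrP : 0 <= x * r 0%N * P1 by apply: Rmult_le_pos; nra.
split; first exact: E0.
split.
- have h6 : x * r 0%N * P1 * W <= x * r 0%N * P1 * (k * r 0%N * (1 - P1)).
    by apply: Rmult_le_compat_l.
  have h7 : x * r 0%N * P1 * (k * r 0%N * (1 - P1)) = P1 * k * r 0%N * E by rewrite eE; ring.
  rewrite eV; nra.
- rewrite eV; have : 0 <= x * r 0%N * P1 * W by apply: Rmult_le_pos. nra.
Qed.

Lemma case_iii_alg :
  0 < x * (P - 1 + sumR [:: 0, 1 & l2]%N (fun i => 1 - r i)) /\
  ((1 + / (x - 1)) * P * Q) * (x * (P - 1 + sumR [:: 0, 1 & l2]%N (fun i => 1 - r i))) <= V /\
  V <= ((1 + / (x - 1)) * P) * (x * (P - 1 + sumR [:: 0, 1 & l2]%N (fun i => 1 - r i))).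
Proof.
set F := P - 1 + _.
set mu := / (x - 1).
have mu0 : 0 < mu by apply: Rinv_0_lt_compat; lra.
have mux : mu * (x - 1) = 1 by rewrite /mu Rinv_l; lra.
have H4 : forall i, i \in [:: 0, 1 & l2]%N ->
    0 <= r i <= 1 /\ s i = 1 - (1 + mu) * (1 - r i) /\ 0 <= s i.
  move=> i hi; have := Hr hi; have [e s0] := Hs hi; move=> hr.
  split; first lra; split; last lra.
  rewrite e /mu; field; lra.
have [[Q0 QP] P1' _ _ [F0 hlo hup]] := L4 (Rlt_le _ _ mu0) H4.
rewrite -/P -/Q -/F in Q0 QP P1' F0 hlo hup.
have H42 : forall i, i \in l2 ->
    0 <= r i <= 1 /\ s i = 1 - (1 + mu) * (1 - r i) /\ 0 <= s i.
  by move=> i hi; apply: H4; rewrite !inE hi !orbT.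
have [[_ _] P21 _ _ [F20 _ _]] := L4 (Rlt_le _ _ mu0) H42.
have hP20 : 0 <= prodR l2 r by have := P01 (fun i hi => proj1 (H42 i hi)); lra.
have r0 := Hr (mem_head _ _).
have r1 := Hr (memb 0%N (mem_head 1%N l2)).
have eF : F = (prodR l2 r - 1 + sumR l2 (fun i => 1 - r i)) +
   ((1 - r 0%N) * (1 - r 1%N) + (1 - r 0%N * r 1%N) * (1 - prodR l2 r)).
  rewrite /F /P /prodR /sumR /= -/(prodR l2 r) -/(sumR l2 _); ring.
have Fpos : 0 < F.
  rewrite eF; have : 0 < (1 - r 0%N) * (1 - r 1%N) by apply: Rmult_lt_0_compat; lra.
  have : 0 <= (1 - r 0%N * r 1%N) * (1 - prodR l2 r) by apply: Rmult_le_pos; nra.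
  lra.
set g := 1 + (x - 1) * Q - x * P.
have eV : V = x * P * g by rewrite /V /g; ring.
have eg : g = (mu * (1 - P) - (P - Q)) * (x - 1).
  rewrite /g; have : mu * x = 1 + mu by nra. nra.
have glo : (1 + mu) * Q * F <= g.
  rewrite eg; have := Rmult_le_compat_r (x - 1) _ _ (ltac:(lra) : 0 <= x - 1) hlo.
  have : (1 + mu) * mu * Q * F * (x - 1) = (1 + mu) * Q * F * (mu * (x - 1)) by ring.
  rewrite mux; lra.
have gup : g <= (1 + mu) * F.
  rewrite eg; have := Rmult_le_compat_r (x - 1) _ _ (ltac:(lra) : 0 <= x - 1) hup.
  have : (1 + mu) * mu * F * (x - 1) = (1 + mu) * F * (mu * (x - 1)) by ring.
  rewrite mux; lra.
have xP0 : 0 <= x * P by apply: Rmult_le_pos; lra.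
split; first by apply: Rmult_lt_0_compat; lra.
rewrite eV; split.
- have := Rmult_le_compat_l _ _ _ xP0 glo; nra.
- have := Rmult_le_compat_l _ _ _ xP0 gup; nra.
Qed.
End Alg.

Lemma chain (f : nat -> nat) m : (forall i, (i.+1 < m)%N -> (f i <= f i.+1)%N) ->
  forall i j, (i <= j)%N -> (j < m)%N -> (f i <= f j)%N.
Proof.
move=> h i; elim=> [|j IH] hij hj.
  by move: hij; rewrite leqn0 => /eqP ->.
rewrite leq_eqVlt in hij; case/orP: hij => [/eqP -> //| hij].
exact: leq_trans (IH hij (ltnW hj)) (h j hj).
Qed.

Lemma iota_split m : (2 <= m)%N -> iota 0 m = [:: 0, 1 & iota 2 (m - 2)]%N.
Proof. by case: m => [|[|k]] //= _; rewrite subSS subSS subn0. Qed.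

Lemma per_n m (a : nat -> nat -> nat) n : (2 <= n)%N ->
  (forall i, (i < m)%N -> (2 <= a i n)%N /\ (a i n <= n - 1)%N) ->
  let x := INR n in let r := fun i => INR (a i n) / INR n in
  let s := fun i => (INR (a i n) - 1) / (INR n - 1) in
  let P := prodR (iota 0 m) r in let Q := prodR (iota 0 m) s in
  [/\ 0 < INR #|samples m n (fun i => a i n)|, Expect (fun i => a i n) (@X1 m n) = x * P,
   Var (fun i => a i n) (@X1 m n) = x * P + x * (x - 1) * (P * Q) - (x * P) ^ 2,
   2 <= x & (forall i, i \in iota 0 m -> 0 < r i < 1 /\
      (s i = (x * r i - 1) / (x - 1) /\ 0 < s i))].
Proof.
move=> n2 Ha x r s P Q.
have Ha' : forall i, (i < m)%N -> (2 <= a i n)%N && (a i n <= n)%N.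
  move=> i hi; have [h1 h2] := Ha i hi; rewrite h1 /=; apply: leq_trans h2 _; exact: leq_subr.
have [N0 E1 E2] := moments n2 Ha'.
have x2 : 2 <= x by have := le_INR 2 n (leP n2); rewrite /x /=; lra.
split => //.
- rewrite Var_eq; last lra.
  by rewrite E2 E1.
- move=> i; rewrite mem_iota add0n => /andP[_ hi]; have [h1 h2] := Ha i hi.
  have : 2 <= INR (a i n) by have := le_INR 2 _ (leP h1); rewrite /=; lra.
  have : INR (a i n) <= INR n - 1.
    rewrite -(INR_subn (x := n) (y := 1)); last by apply: leq_trans n2.
    exact: le_INR (leP h2).
  rewrite /s /r -/x => h3 h4; split; first split.
    apply: Rdiv_lt_0_compat; lra.
    apply: (Rmult_lt_reg_r x); first lra.
    rewrite /Rdiv Rmult_assoc Rinv_l; lra.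
  split.
    field; lra.
  apply: Rdiv_lt_0_compat; lra.
Qed.

Lemma cv_lim u l l' : Un_cv u l -> l = l' -> Un_cv u l'.
Proof. by move=> h <-. Qed.

Lemma cv_one (u v : nat -> R) : ev (fun n => u n <= v n <= 1) -> Un_cv u 1 ->
  Un_cv (fun n => 1 - v n) 0.
Proof.
move=> hb h.
apply: (squeeze (L := fun _ => 0) (U := fun n => 1 - u n)).
- by apply: (ev_mono hb) => n hn; lra.
- exact: cv_const.
- apply: cv_lim; first exact: CV_minus (cv_const 1) h.
  ring.
Qed.

Lemma cv_prod1 l (f : nat -> nat -> R) : ev (fun n => forall i, i \in l -> 0 <= f n i <= 1) ->
  (forall i, i \in l -> Un_cv (fun n => 1 - f n i) 0) -> Un_cv (fun n => prodR l (f n)) 1.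
Proof.
move=> hb h.
apply: (squeeze (L := fun n => 1 - sumR l (fun i => 1 - f n i)) (U := fun _ => 1)).
- apply: (ev_mono hb) => n hn; split; first by have := L2 hn; lra.
  by have := P01 hn; lra.
- apply: cv_lim; first exact: CV_minus (cv_const 1) (cv_sumR h).
  ring.
- exact: cv_const.
Qed.

Lemma cv_ext (u v : nat -> R) l : ev (fun n => u n = v n) -> Un_cv u l -> Un_cv v l.
Proof.
move=> he h; apply: (squeeze (L := u) (U := u)) => //.
by apply: (ev_mono he) => n ->; lra.
Qed.

Lemma ratio_le (p q n : nat) : (p <= q)%N -> (0 < n)%N -> INR p / INR n <= INR q / INR n.
Proof.
move=> h n0; apply: Rmult_le_compat_r; last exact: le_INR (leP h).
apply: Rlt_le; apply: Rinv_0_lt_compat; apply: lt_0_INR; exact/ltP.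
Qed.
Local Close Scope R_scope.
Unset Implicit Arguments.
Set Strict Implicit.
Theorem lemma2 (m : nat) (a : nat -> nat -> nat)
  (Hm : (2 <= m)%N)
  (* (A2) *)
  (HA2a : forall i, (i < m)%N -> cv_infty (fun n => INR (a i n)))
  (HA2b : forall i, (i < m)%N -> cv_infty (fun n => Rminus (INR n) (INR (a i n))))
  (* (A3), for all large n *)
  (HA3 : exists N, forall n, (N <= n)%N ->
           (1 <= a 0 n)%N /\
           (forall i, (i.+1 < m)%N -> (a i n <= a i.+1 n)%N) /\
           (a (m - 1) n <= n - 1)%N)
  (* (A4) *)
  (HA4 : forall i, (i < m)%N -> exists alpha : R,
           Rle R0 alpha /\ Rle alpha R1 /\
           Un_cv (fun n => Rdiv (INR (a i n)) (INR n)) alpha) :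
  (* (i) *)
  ((Un_cv (fun n => Rdiv (INR (a 0 n)) (INR n)) R0 /\
    Un_cv (fun n => Rdiv (INR (a 1 n)) (INR n)) R0) ->
   asym (fun n => Expect (fun i => a i n) (@X1 m n))
        (fun n => Var (fun i => a i n) (@X1 m n))) /\
  (* (ii) *)
  ((Un_cv (fun n => Rdiv (INR (a 0 n)) (INR n)) R0 /\
    Un_cv (fun n => Rdiv (INR (a 1 n)) (INR n)) R1) ->
   asym (fun n => Expect (fun i => a i n)
                    (fun S : Sample m n => Rminus (INR (a 0 n)) (X1 S)))
        (fun n => Var (fun i => a i n) (@X1 m n))) /\
  (* (iii) *)
  ((Un_cv (fun n => Rdiv (INR (a 0 n)) (INR n)) R1 /\
    Un_cv (fun n => Rdiv (INR (a 1 n)) (INR n)) R1) ->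
   asym (fun n => Expect (fun i => a i n)
                    (fun S : Sample m n =>
                       Rminus (Rplus (X1 S) (Rmult (INR (m - 1)) (INR n)))
                              (foldr Rplus R0 (map (fun i => INR (a i n)) (iota 0 m)))))
        (fun n => Var (fun i => a i n) (@X1 m n))).
Proof.
Open Scope R_scope.
have Hev2 : ev (fun n => forall i, (i < m)%N -> (2 <= a i n)%N).
  apply: ev_all => i hi; have [N hN] := HA2a i hi 1.
  exists N => n hn; have h := hN n (leP hn).
  have h2 : INR 1 < INR (a i n) by rewrite /=; lra.
  by apply/ltP; apply: INR_lt.
have Hgood : ev (fun n => (2 <= n)%N /\ forall i, (i < m)%N ->
     [/\ (2 <= a i n)%N, (a i n <= n - 1)%N, (a 0 n <= a i n)%N & (1 <= i -> a 1 n <= a i n)%N]).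
  have H2 := ev_and Hev2 HA3.
  apply: (ev_mono H2) => n [h2 [_ [h3b h3c]]].
  have ch := chain h3b.
  have m1 : (m - 1 < m)%N by lia.
  have hin : forall i, (i < m)%N -> (a i n <= n - 1)%N.
    move=> i hi; apply: leq_trans (ch i (m - 1)%N _ m1) h3c; lia.
  have m0 : (0 < m)%N by lia.
  have h20 := h2 0%N m0; have hin0 := hin 0%N m0.
  split; first lia.
  move=> i hi; split; [exact: h2 | exact: hin | exact: ch | ].
  by move=> i1; apply: ch.
have Hmain : ev (fun n =>
   let x := INR n in let r := fun i => INR (a i n) / INR n in
   let s := fun i => (INR (a i n) - 1) / (INR n - 1) in
   let P := prodR (iota 0 m) r in let Q := prodR (iota 0 m) s in
   [/\ 0 < INR #|samples m n (fun i => a i n)|, Expect (fun i => a i n) (@X1 m n) = x * P,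
   Var (fun i => a i n) (@X1 m n) = x * P + x * (x - 1) * (P * Q) - (x * P) ^ 2,
   2 <= x & (forall i, i \in iota 0 m -> 0 < r i < 1 /\
      (s i = (x * r i - 1) / (x - 1) /\ 0 < s i))]).
  apply: (ev_mono Hgood) => n [n2 hg]; apply: per_n => // i hi.
  by have [? ? _ _] := hg i hi.
have eio := iota_split Hm.
set l2 := iota 2 (m - 2) in eio.
set k := INR (size (1 :: l2)%N).
have hi1 : forall i, i \in (1 :: l2)%N -> (1 <= i)%N /\ (i < m)%N.
  move=> i; rewrite inE => /orP[/eqP -> | ]; first lia.
  by rewrite /l2 mem_iota; lia.
have hi0 : forall i, i \in [:: 0, 1 & l2]%N -> (i < m)%N.
  by move=> i; rewrite -eio mem_iota; lia.
have hrb : ev (fun n => forall i, i \in [:: 0, 1 & l2]%N -> 0 <= INR (a i n) / INR n <= 1).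
  apply: (ev_mono Hmain) => n /=; rewrite eio => [[_ _ _ _ hrs]] i hi.
  by have [[? ?] _] := hrs i hi; lra.
split; [|split].
-
  move=> [h0 h1].
  eapply (asym_of (L := fun n => 1 - (2 * k * (INR (a 0%N n) / INR n) + INR (a 1%N n) / INR n))
                  (U := fun _ => 1)).
  + apply: (ev_mono Hmain) => n /=; rewrite eio.
    move=> [N0 E1 V1 x2 hrs].
    rewrite E1 V1.
    have Hr : forall i, i \in [:: 0, 1 & l2]%N -> 0 < INR (a i n) / INR n < 1.
      by move=> i /hrs [].
    have Hs : forall i, i \in [:: 0, 1 & l2]%N ->
       (INR (a i n) - 1) / (INR n - 1) = (INR n * (INR (a i n) / INR n) - 1) / (INR n - 1) /\
       0 < (INR (a i n) - 1) / (INR n - 1).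
      by move=> i /hrs [].
    exact: (case_i_alg x2 Hr Hs).
  + apply: cv_lim.
      apply: CV_minus; first exact: cv_const.
      apply: CV_plus; last exact: h1.
      apply: CV_mult; first exact: cv_const.
      exact: h0.
    ring.
  + exact: cv_const.
-
  move=> [h0 h1].
  have cvr : forall i, i \in (1 :: l2)%N -> Un_cv (fun n => 1 - INR (a i n) / INR n) 0.
    move=> i hi; have [i1 im] := hi1 i hi.
    apply: (cv_one (u := fun n => INR (a 1%N n) / INR n)) => //.
    apply: (ev_mono (ev_and Hgood hrb)) => n [[n2 hg] hb]; split.
      have [_ _ _ h] := hg i im; apply: ratio_le; [exact: h i1 | lia].
    by have [_ ?] := hb i (memb 0%N hi).
  have cvP1 : Un_cv (fun n => prodR (1 :: l2)%N (fun i => INR (a i n) / INR n)) 1.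
    apply: cv_prod1 => //.
    by apply: (ev_mono hrb) => n hb i hi; apply: hb; apply: memb.
  eapply (asym_of (L := fun n => prodR (1 :: l2)%N (fun i => INR (a i n) / INR n) *
                       (1 - k * (INR (a 0%N n) / INR n)))
                  (U := fun n => prodR (1 :: l2)%N (fun i => INR (a i n) / INR n))).
  + apply: (ev_mono Hmain) => n /=; rewrite eio.
    move=> [N0 E1 V1 x2 hrs].
    have eE : Expect (fun i => a i n) (fun S : Sample m n => INR (a 0%N n) - X1 S) =
        INR n * (INR (a 0%N n) / INR n) - INR n * prodR [:: 0, 1 & l2]%N (fun i => INR (a i n) / INR n).
    { rewrite (@E_ext _ _ _ _ (fun S => INR (a 0%N n) + (-1) * X1 S)); last by move=> S; ring.
      rewrite E_aff; last by apply: Rgt_not_eq.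
      rewrite E1; field; lra. }
    rewrite eE V1.
    have Hr : forall i, i \in [:: 0, 1 & l2]%N -> 0 < INR (a i n) / INR n < 1.
      by move=> i /hrs [].
    have Hs : forall i, i \in [:: 0, 1 & l2]%N ->
       (INR (a i n) - 1) / (INR n - 1) = (INR n * (INR (a i n) / INR n) - 1) / (INR n - 1) /\
       0 < (INR (a i n) - 1) / (INR n - 1).
      by move=> i /hrs [].
    exact: (case_ii_alg x2 Hr Hs).
  + apply: cv_lim.
      apply: CV_mult; first exact: cvP1.
      apply: CV_minus; first exact: cv_const.
      apply: CV_mult; first exact: cv_const.
      exact: h0.
    ring.
  + exact: cvP1.
-
  move=> [h0 h1].
  have cvr : forall i, i \in [:: 0, 1 & l2]%N -> Un_cv (fun n => 1 - INR (a i n) / INR n) 0.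
    move=> i hi; have im := hi0 i hi.
    apply: (cv_one (u := fun n => INR (a 0%N n) / INR n)) => //.
    apply: (ev_mono (ev_and Hgood hrb)) => n [[n2 hg] hb]; split.
      have [_ _ h _] := hg i im; apply: ratio_le; [exact: h | lia].
    by have [_ ?] := hb i hi.
  have cvP : Un_cv (fun n => prodR [:: 0, 1 & l2]%N (fun i => INR (a i n) / INR n)) 1.
    exact: cv_prod1.
  have cvlam : Un_cv (fun n => 1 + / (INR n - 1)) 1.
    apply: cv_lim; first exact: CV_plus (cv_const 1) cv_mu.
    ring.
  have cvQ : Un_cv (fun n => prodR [:: 0, 1 & l2]%N (fun i => (INR (a i n) - 1) / (INR n - 1))) 1.
    apply: cv_prod1.
      apply: (ev_mono Hmain) => n /=; rewrite eio => [[_ _ _ x2 hrs]] i hi.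
      have [[r0 r1] [e s0]] := hrs i hi; split; first lra.
      rewrite e; apply: (Rmult_le_reg_r (INR n - 1)); first lra.
      rewrite /Rdiv Rmult_assoc Rinv_l; first nra. lra.
    move=> i hi.
    apply: (cv_ext (u := fun n => (1 + / (INR n - 1)) * (1 - INR (a i n) / INR n))).
      apply: (ev_mono Hmain) => n /=; rewrite eio => [[_ _ _ x2 hrs]].
      field; split; lra.
    apply: cv_lim; first exact: CV_mult cvlam (cvr i hi).
    ring.
  eapply (asym_of
     (L := fun n => (1 + / (INR n - 1)) * prodR [:: 0, 1 & l2]%N (fun i => INR (a i n) / INR n)
                    * prodR [:: 0, 1 & l2]%N (fun i => (INR (a i n) - 1) / (INR n - 1)))
     (U := fun n => (1 + / (INR n - 1)) * prodR [:: 0, 1 & l2]%N (fun i => INR (a i n) / INR n))).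
  + apply: (ev_mono Hmain) => n /=; rewrite eio.
    move=> [N0 E1 V1 x2 hrs].
    have eE : Expect (fun i => a i n) (fun S : Sample m n =>
         X1 S + INR (m - 1) * INR n - foldr Rplus R0 (map (fun i => INR (a i n)) [:: 0, 1 & l2]%N)) =
        INR n * (prodR [:: 0, 1 & l2]%N (fun i => INR (a i n) / INR n) - 1 +
                 sumR [:: 0, 1 & l2]%N (fun i => 1 - INR (a i n) / INR n)).
    { rewrite (@E_ext _ _ _ _ (fun S => (INR (m - 1) * INR n -
          foldr Rplus R0 (map (fun i => INR (a i n)) [:: 0, 1 & l2]%N)) + 1 * X1 S));
        last by move=> S; ring.
      rewrite E_aff; last by apply: Rgt_not_eq.
      rewrite E1 sumR_sub sumR_div -eio size_iota INR_subn; last lia.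
      rewrite /sumR eio.
      change (INR 1) with 1.
 field; lra. }
    rewrite eE V1.
    have Hr : forall i, i \in [:: 0, 1 & l2]%N -> 0 < INR (a i n) / INR n < 1.
      by move=> i /hrs [].
    have Hs : forall i, i \in [:: 0, 1 & l2]%N ->
       (INR (a i n) - 1) / (INR n - 1) = (INR n * (INR (a i n) / INR n) - 1) / (INR n - 1) /\
       0 < (INR (a i n) - 1) / (INR n - 1).
      by move=> i /hrs [].
    exact: (case_iii_alg x2 Hr Hs).
  + have hh := CV_mult _ _ _ _ (CV_mult _ _ _ _ cvlam cvP) cvQ.
    rewrite !Rmult_1_l in hh; exact: hh.
  + have hh := CV_mult _ _ _ _ cvlam cvP.
    rewrite !Rmult_1_l in hh; exact: hh.
Qed.
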